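(* Let $n\ge 0$. The map $\mathrm{shift}$ restricts to bijections (1) from the set of feasible set partitions of $[n]$ onto the set of 2-regular set partitions $\Lambda$ of $[n+1]$ such that $1+\max B\neq \min B'$ for all blocks $B,B'\in\Lambda$; and (2) from the set of poor noncrossing set partitions of $[n]$ onto the set of 2-regular noncrossing set partitions of $[n+1]$.
   Context: A set partition is a set of nonempty pairwise disjoint finite sets of integers (blocks); it is a partition of $\mathcal X$ if the union of its blocks is $\mathcal X$; $[n]=\{1,\dots,n\}$. A pair $(i,j)$ is an arc of $\Lambda$ if $i<j$ lie in the same block and $j$ is the least element of that block greater than $i$; $\mathrm{Arc}(\Lambda)$ is the set of arcs, which together with the ground set determines $\Lambda$. $\Lambda$ is noncrossing if there are no arcs $(i,k),(j,l)$ with $i<j<k<l$. A partition is feasible if every block has at least two elements, poor if every block has at most two elements, and 2-regular if no block contains both $i$ and $i+1$ for any integer $i$. For a partition $\Lambda$ of $[n]$, $\mathrm{shift}(\Lambda)$ is the partition of $[n+1]$ with arc set $\{(i,j+1):(i,j)\in\mathrm{Arc}(\Lambda)\}$. *)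

(* Defs.v *)
From mathcomp Require Import all_boot.
Set Implicit Arguments. Unset Strict Implicit. Unset Printing Implicit Defensive.

(* Set partitions of finite sets of integers are encoded as finite sets of
   finite sets over an ordinal type 'I_N; an ordinal x stands for the
   integer [val x].  The ground set [n] = {1,...,n} lives in 'I_n.+1. *)

Definition ground (n : nat) : {set 'I_n.+1} := [set i : 'I_n.+1 | 0 < val i].

Section Partitions.
Variable N : nat.
Implicit Types (P : {set {set 'I_N}}) (B : {set 'I_N}).

Definition is_arc P (i j : nat) : bool :=
  [exists B in P, [exists x in B, [exists y in B,
     [&& val x == i, val y == j, i < j &
         [forall z in B, (i < val z) ==> (j <= val z)]]]]].

Definition noncrossing P : bool :=
  [forall i : 'I_N, forall j : 'I_N, forall k : 'I_N, forall l : 'I_N,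
     ~~ [&& is_arc P i k, is_arc P j l, i < j, j < k & k < l]].

Definition feasible P : bool := [forall B in P, 2 <= #|B|].

Definition poor P : bool := [forall B in P, #|B| <= 2].

Definition two_regular P : bool :=
  [forall B in P, forall x in B, forall y in B, val y != (val x).+1].

Definition max_min_sep P : bool :=
  [forall B in P, forall B' in P, forall x in B, forall y in B',
     ([forall z in B, val z <= val x] && [forall z in B', val y <= val z])
       ==> ((val x).+1 != val y)].

End Partitions.

(* shift(L): the partition of [n+1] whose arc set is {(i, j+1) : (i,j) in Arc(L)}.
   (Such a partition exists and is unique; we pick it, defaulting to set0.) *)
Definition shift (n : nat) (L : {set {set 'I_n.+1}}) : {set {set 'I_n.+2}} :=
  odflt set0 [pick Q : {set {set 'I_n.+2}} |
     partition Q (ground n.+1) &&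
     [forall i : 'I_n.+2, forall j : 'I_n.+2,
        is_arc Q i j == ((0 < val j) && is_arc L i (val j).-1)]].

Definition set_partitions (n : nat) : {set {set {set 'I_n.+1}}} :=
  [set L | partition L (ground n)].

(* Main.v *)
Require Import Defs.
From mathcomp Require Import all_boot zify.
Set Implicit Arguments. Unset Strict Implicit. Unset Printing Implicit Defensive.

Section Gen.
Variable N : nat.
Implicit Types (P : {set {set 'I_N}}) (B D : {set 'I_N}).

Lemma min_above B (x y : 'I_N) : x \in B -> y \in B -> x < y ->
  exists2 z, z \in B & (x < z) && [forall w in B, (x < w) ==> (z <= w)].
Proof.
move=> xB yB xy.
have P0 : (fun w : 'I_N => (w \in B) && (x < w)) y by rewrite /= yB xy.
case: (@arg_minnP _ y (fun w : 'I_N => (w \in B) && (x < w)) val P0) => z /andP[zB xz] zmin.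
exists z => //; rewrite xz /=; apply/forall_inP => w wB; apply/implyP => xw.
by apply: zmin; rewrite wB xw.
Qed.

Lemma max_below B (x y : 'I_N) : x \in B -> y \in B -> x < y ->
  exists2 z, z \in B & (z < y) && [forall w in B, (w < y) ==> (w <= z)].
Proof.
move=> xB yB xy.
have P0 : (fun w : 'I_N => (w \in B) && (w < y)) x by rewrite /= xB xy.
case: (@arg_maxnP _ x (fun w : 'I_N => (w \in B) && (w < y)) val P0) => z /andP[zB xz] zmax.
exists z => //; rewrite xz /=; apply/forall_inP => w wB; apply/implyP => xw.
by apply: zmax; rewrite wB xw.
Qed.

Lemma arcP P i j : is_arc P i j -> exists B (x : 'I_N) (y : 'I_N),
  [/\ B \in P, x \in B, y \in B, (x : nat) = i & (y : nat) = j] /\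
  (i < j /\ forall z, z \in B -> i < (z : nat) -> j <= (z : nat)).
Proof.
case/existsP => B /andP[BP /existsP[x /andP[xB /existsP[y /andP[yB]]]]].
case/and4P => /eqP xi /eqP yj ij /forall_inP H.
exists B, x, y; split=> //; split=> // z zB iz; exact: (implyP (H z zB) iz).
Qed.

Lemma arc_intro P B (x y : 'I_N) : B \in P -> x \in B -> y \in B -> x < y ->
  (forall z, z \in B -> x < z -> y <= z) -> is_arc P x y.
Proof.
move=> BP xB yB xy H; apply/existsP; exists B; rewrite BP /=.
apply/existsP; exists x; rewrite xB /=; apply/existsP; exists y; rewrite yB /=.
rewrite !eqxx xy /=; apply/forall_inP => z zB; apply/implyP; exact: H.
Qed.

Lemma arc_lt P i j : is_arc P i j -> i < j.
Proof. by case/arcP => B [x [y [_ []]]]. Qed.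

Lemma arc_bnd P i j : is_arc P i j -> j < N.
Proof. by case/arcP => B [x [y [[_ _ _ _ yj] _]]]; rewrite -yj ltn_ord. Qed.

Lemma arc_fun P i j j' : trivIset P -> is_arc P i j -> is_arc P i j' -> j = j'.
Proof.
move=> tI /arcP [B [x [y [[BP xB yB xi yj] [ij Hm]]]]].
case/arcP => [B' [x' [y' [[BP' xB' yB' xi' yj'] [ij' Hm']]]]].
have exx : x = x' by apply: ord_inj; rewrite xi xi'.
subst x'.
have eBB : B = B' by rewrite -(def_pblock tI BP xB) (def_pblock tI BP' xB').
subst B'.
move: (Hm y' yB') (Hm' y yB); rewrite -yj -yj' => h1 h2; apply/eqP; rewrite eqn_leq h1 ?h2 //; lia.
Qed.

Lemma arc_inj P i i' j : trivIset P -> is_arc P i j -> is_arc P i' j -> i = i'.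
Proof.
move=> tI /arcP [B [x [y [[BP xB yB xi yj] [ij Hm]]]]].
case/arcP => [B' [x' [y' [[BP' xB' yB' xi' yj'] [ij' Hm']]]]].
have eyy : y = y' by apply: ord_inj; rewrite yj yj'.
subst y'.
have eBB : B = B' by rewrite -(def_pblock tI BP yB) (def_pblock tI BP' yB').
subst B'.
have := Hm x' xB'; have := Hm' x xB. lia.
Qed.

Lemma succ_ex P B (x y : 'I_N) : B \in P -> x \in B -> y \in B -> x < y ->
  exists z : 'I_N, is_arc P x z.
Proof.
move=> BP xB yB xy; case: (min_above xB yB xy) => z zB /andP[xz /forall_inP H].
exists z; apply: (arc_intro BP xB zB xz) => w wB xw; exact: (implyP (H w wB) xw).
Qed.

Lemma pred_ex P B (x y : 'I_N) : B \in P -> x \in B -> y \in B -> x < y ->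
  exists z : 'I_N, is_arc P z y.
Proof.
move=> BP xB yB xy; case: (max_below xB yB xy) => z zB /andP[zy /forall_inP H].
exists z; apply: (arc_intro BP zB yB zy) => w wB zw.
have := implyP (H w wB); case: ltnP => //; lia.
Qed.

End Gen.

Section Lab.
Variable N : nat.
Variable A : nat -> nat -> bool.
Hypothesis Hlt : forall i j, A i j -> i < j.
Hypothesis Hfun : forall i j j', A i j -> A i j' -> j = j'.
Hypothesis Hinj : forall i i' j, A i j -> A i' j -> i = i'.

Definition predo (y : 'I_N) : option 'I_N := [pick x : 'I_N | A x y].

Fixpoint labf (f : nat) (y : 'I_N) : 'I_N :=
  if f is f'.+1 then (if predo y is Some x then labf f' x else y) else y.

Definition lab (y : 'I_N) := labf (nat_of_ord y).+1 y.

Lemma labfE f g (y : 'I_N) : y < f -> y < g -> labf f y = labf g y.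
Proof.
elim: f g y => [|f IH] [|g] y //= yf yg.
rewrite /predo; case: pickP => [x Axy|] //.
have := Hlt Axy => xy; apply: IH; lia.
Qed.

Lemma labE (y : 'I_N) : lab y = if predo y is Some x then lab x else y.
Proof.
case E: (predo y) => [x|]; last by rewrite /lab /= E.
have Axy : A x y by move: E; rewrite /predo; case: pickP => [z Azy [<-]|].
rewrite /lab /= E; change (labf y x = labf x.+1 x).
have := Hlt Axy => xy; apply: labfE; lia.
Qed.

Lemma predoS (x y : 'I_N) : A x y -> predo y = Some x.
Proof.
move=> Axy; rewrite /predo; case: pickP => [z Azy|/(_ x)]; last by rewrite Axy.
by congr Some; apply: ord_inj; apply: Hinj Azy Axy.
Qed.

Lemma lab_pred (x y : 'I_N) : A x y -> lab y = lab x.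
Proof. by move=> Axy; rewrite labE (predoS Axy). Qed.

Lemma lab_nopred (y : 'I_N) : (forall x : 'I_N, ~~ A x y) -> lab y = y.
Proof.
move=> H; rewrite labE /predo; case: pickP => [z Azy|] //.
by have := H z; rewrite Azy.
Qed.

Lemma lab_le (y : 'I_N) : lab y <= y.
Proof.
have [n] := ubnP y; elim: n y => [|n IH] y // yn.
rewrite labE /predo; case: pickP => [x Axy|] //.
have := Hlt Axy => xy; have := IH x; lia.
Qed.

Lemma chain (a b : 'I_N) : a < b -> lab a = lab b ->
  exists2 p : 'I_N, A p b & a <= p.
Proof.
have [s] := ubnP (a + b); elim: s a b => [|s IH] a b //= sab ab eab.
case E: (predo b) => [p|]; last first.
  move: eab; rewrite [lab b]labE E => eab; have := lab_le a; rewrite eab; lia.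
have Apb : A p b by move: E; rewrite /predo; case: pickP => [z Azb [<-]|].
case: (leqP a p) => ap; first by exists p.
have epa : lab p = lab a by rewrite eab (lab_pred Apb).
case: (IH p a _ ap epa) => [|q Aqa pq]; first lia.
have npq : (p : nat) <> q.
  move=> epq; move: Aqa; rewrite -epq => Apa; have := Hfun Apb Apa; lia.
have qa := Hlt Aqa.
have eqb : lab q = lab b by rewrite -(lab_pred Aqa) eab.
case: (IH q b _ _ eqb) => [||r Arb qr]; try lia.
have := Hinj Arb Apb; lia.
Qed.

Variable D : {set 'I_N}.
Hypothesis HN : forall i j, A i j -> j < N.
Hypothesis HD : forall a b : 'I_N, A a b -> (a \in D) && (b \in D).

Lemma exist_part_arc i j : is_arc (preim_partition lab D) i j = A i j.
Proof.
apply/idP/idP.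
  case/arcP => B [x [y [[BP xB yB xi yj] [ij Hm]]]].
  case/imsetP: BP => c cD eB; subst B.
  move: xB yB; rewrite !inE => /andP[xD /eqP cx] /andP[yD /eqP cy].
  subst i j.
  case: (chain ij _) => [|p Apy xp]; first by rewrite -cx -cy.
  case: (ltnP x p) => xp'.
    have pB : p \in [set y in D | lab c == lab y].
      by rewrite inE; case/andP: (HD Apy) => pD _; rewrite pD cy (lab_pred Apy) eqxx.
    have := Hm p pB xp'; have := Hlt Apy; lia.
  have -> : x = p by apply: ord_inj; lia.
  done.
move=> Aij.
have ij := Hlt Aij; have jN := HN Aij.
have iN : i < N by lia.
pose a := Ordinal iN; pose b := Ordinal jN.
have Aab : A a b by [].
case/andP: (HD Aab) => aD bD.
apply: (@arc_intro _ _ [set y in D | lab a == lab y] a b).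
- exact: imset_f.
- by rewrite inE aD eqxx.
- by rewrite inE bD (lab_pred Aab) eqxx.
- by [].
move=> z; rewrite inE => /andP[zD /eqP ez] az.
case: (leqP b z) => // zb.
case: (chain zb _) => [|p Apb zp]; first by rewrite -ez (lab_pred Aab).
have := Hinj Apb Aab; simpl in *; lia.
Qed.

Lemma exist_part : exists Q : {set {set 'I_N}},
  partition Q D /\ forall i j, is_arc Q i j = A i j.
Proof. exists (preim_partition lab D); split; [exact: preim_partitionP | exact: exist_part_arc]. Qed.

End Lab.

Section Canon.
Variable N : nat.
Variables (P : {set {set 'I_N}}) (D : {set 'I_N}).
Hypothesis partP : partition P D.
Variable A : nat -> nat -> bool.
Hypothesis HA : forall i j, A i j = is_arc P i j.

Let tI : trivIset P. Proof. by case/and3P: partP. Qed.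
Let cP : cover P = D. Proof. by case/and3P: partP => /eqP. Qed.

Let Hlt i j : A i j -> i < j. Proof. rewrite HA; exact: arc_lt. Qed.
Let Hfun i j j' : A i j -> A i j' -> j = j'.
Proof. rewrite !HA; exact: arc_fun. Qed.
Let Hinj i i' j : A i j -> A i' j -> i = i'.
Proof. rewrite !HA; exact: arc_inj. Qed.

Lemma arc_same (a b : 'I_N) : is_arc P a b ->
  [/\ a \in D, b \in D & pblock P a = pblock P b].
Proof.
case/arcP => B [x [y [[BP xB yB xa yb] _]]].
have -> : a = x by apply: ord_inj.
have -> : b = y by apply: ord_inj.
have xD : x \in D by rewrite -cP; apply/bigcupP; exists B.
have yD : y \in D by rewrite -cP; apply/bigcupP; exists B.
by rewrite xD yD (def_pblock tI BP xB) (def_pblock tI BP yB).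
Qed.

Lemma lab_in (x : 'I_N) : x \in D -> lab A x \in pblock P x.
Proof.
have [n] := ubnP x; elim: n x => [|n IH] x // xn xD.
rewrite (labE Hlt); case E: (predo A x) => [p|]; last by rewrite mem_pblock cP.
have Apx : A p x by move: E; rewrite /predo; case: pickP => [z Azy [<-]|].
have := Apx; rewrite HA => /arc_same [pD _ <-].
apply: IH => //; have := Hlt Apx; lia.
Qed.

Lemma lab_blk (y : 'I_N) : forall x : 'I_N, x \in pblock P y -> x < y ->
  lab A x = lab A y.
Proof.
have [n] := ubnP y; elim: n y => [|n IH] y // yn x xB xy.
have yD : y \in D.
  move: xB; rewrite -cP /pblock; case: pickP => [B /andP[BP yB] _ | _].
    by apply/bigcupP; exists B.
  by rewrite inE.
have BP : pblock P y \in P by rewrite pblock_mem ?cP.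
have yB : y \in pblock P y by rewrite mem_pblock cP.
case: (max_below xB yB xy) => p pB /andP[py /forall_inP Hm].
have arc : is_arc P p y.
  apply: (arc_intro BP pB yB py) => w wB pw.
  have := implyP (Hm w wB); case: ltnP => //; lia.
rewrite -HA in arc; rewrite (lab_pred Hlt Hinj arc).
have xp : x <= p by have := implyP (Hm x xB) xy.
case: (ltnP x p) => xp'.
  apply: IH; first lia.
    by rewrite (same_pblock tI pB).
  done.
by have -> : x = p by apply: ord_inj; lia.
Qed.

Lemma part_lab : P = preim_partition (lab A) D.
Proof.
rewrite -{1}(preim_partition_pblock partP); apply: eq_in_imset => x xD.
apply/setP => y; rewrite !inE; apply: andb_id2l => yD.
rewrite eq_pblock ?cP //.
apply/idP/idP.
  move=> yB.
  case: (ltngtP x y) => [xy|yx|exy].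
  - by apply/eqP; apply: lab_blk xy; rewrite (same_pblock tI yB) mem_pblock cP.
  - by apply/eqP/esym; apply: lab_blk yx.
  - by have -> : x = y by apply: ord_inj.
move/eqP => e.
have h1 := lab_in xD; have h2 := lab_in yD.
rewrite e in h1.
by rewrite -(same_pblock tI h1) (same_pblock tI h2) mem_pblock cP.
Qed.

End Canon.

Lemma part_uniq N (D : {set 'I_N}) (P1 P2 : {set {set 'I_N}}) :
  partition P1 D -> partition P2 D ->
  (forall i j, is_arc P1 i j = is_arc P2 i j) -> P1 = P2.
Proof.
move=> p1 p2 H.
rewrite (part_lab p1 (A := fun i j => is_arc P1 i j)) //.
by rewrite (part_lab p2 (A := fun i j => is_arc P1 i j)).
Qed.

Section Chars.
Variable N : nat.
Variables (P : {set {set 'I_N}}) (D : {set 'I_N}).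
Hypothesis partP : partition P D.

Let tI : trivIset P. Proof. by case/and3P: partP. Qed.
Let cP : cover P = D. Proof. by case/and3P: partP => /eqP. Qed.
Let n0 : set0 \notin P. Proof. by case/and3P: partP. Qed.

Lemma inD B (x : 'I_N) : B \in P -> x \in B -> x \in D.
Proof. by move=> BP xB; rewrite -cP; apply/bigcupP; exists B. Qed.

Lemma pbP (x : 'I_N) : x \in D -> pblock P x \in P.
Proof. by move=> xD; rewrite pblock_mem ?cP. Qed.

Lemma pbx (x : 'I_N) : x \in D -> x \in pblock P x.
Proof. by move=> xD; rewrite mem_pblock cP. Qed.

Lemma two_regularE : two_regular P = [forall i : 'I_N, ~~ is_arc P i i.+1].
Proof.
apply/idP/idP.
  move/forall_inP => H; apply/forallP => i; apply/negP.
  case/arcP => B [x [y [[BP xB yB xi yj] _]]].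
  have := forall_inP (H B BP) x xB => /forall_inP /(_ y yB).
  by rewrite /= yj xi eqxx.
move/forallP => H; apply/forall_inP => B BP; apply/forall_inP => x xB.
apply/forall_inP => y yB; apply/negP => /eqP e.
have e' : (x : nat).+1 = y by rewrite e.
have := H x; rewrite e' (@arc_intro _ P B x y) //; first by rewrite -e'.
by move=> z _; rewrite -e'.
Qed.

Lemma feasibleE : feasible P =
  [forall x in D, [exists j : 'I_N, is_arc P x j] || [exists i : 'I_N, is_arc P i x]].
Proof.
apply/idP/idP.
  move/forall_inP => H; apply/forall_inP => x xD.
  have := H _ (pbP xD); case/card_gt1P => a [b [aB bB ab]].
  have [y [yB yx]] : exists y, y \in pblock P x /\ y != x.
    case: (eqVneq a x) => [eax|nax]; last by exists a.
    by subst a; exists b; rewrite eq_sym.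
  case: (ltngtP x y) => [xy|yx'|exy].
  - by case: (succ_ex (pbP xD) (pbx xD) yB xy) => j aj; apply/orP; left; apply/existsP; exists j.
  - by case: (pred_ex (pbP xD) yB (pbx xD) yx') => j aj; apply/orP; right; apply/existsP; exists j.
  - by move: yx; rewrite (ord_inj exy) eqxx.
move/forall_inP => H; apply/forall_inP => B BP.
have /set0Pn [x xB] : B != set0 by apply: contraNneq n0 => <-.
have xD := inD BP xB.
have eB := def_pblock tI BP xB.
apply/card_gt1P; case/orP: (H x xD) => /existsP [j aj].
  case: (arc_same partP aj) => _ jD ej.
  exists x, j; rewrite xB -eB ej pbx //; split=> //.
  by apply/eqP => e; have := arc_lt aj; rewrite e ltnn.
case: (arc_same partP aj) => jD _ ej.
exists x, j; rewrite xB -eB -ej pbx //; split=> //.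
by apply/eqP => e; have := arc_lt aj; rewrite e ltnn.
Qed.

Lemma poorE : poor P =
  ~~ [exists i : 'I_N, exists j : 'I_N, exists k : 'I_N, is_arc P i j && is_arc P j k].
Proof.
apply/idP/idP.
  move/forall_inP => H; apply/negP => /existsP [i /existsP [j /existsP [k /andP[a1 a2]]]].
  case: (arc_same partP a1) => iD jD e1.
  case: (arc_same partP a2) => _ kD e2.
  have := H _ (pbP jD); rewrite leqNgt => /negP; apply; apply/card_gt2P.
  have iB : i \in pblock P j by rewrite -e1 pbx.
  have kB : k \in pblock P j by rewrite e2 pbx.
  exists i, j, k; rewrite iB kB pbx //; split=> //.
  have := arc_lt a1; have := arc_lt a2 => h1 h2.
  by split; apply/eqP => e; move: h1 h2; rewrite e; lia.
move=> H; apply/forall_inP => B BP; rewrite leqNgt; apply/negP => /card_gt2P.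
case=> a [b [c [[aB bB cB] [ab bc ca]]]].
have [lo [mi [hi [[loB miB hiB] [l1 l2]]]]] : exists lo mi hi : 'I_N,
    [/\ lo \in B, mi \in B & hi \in B] /\ (lo < mi /\ mi < hi).
  have ab' : (a : nat) <> b by move=> e; move: ab; rewrite (ord_inj e) eqxx.
  have bc' : (b : nat) <> c by move=> e; move: bc; rewrite (ord_inj e) eqxx.
  have ca' : (c : nat) <> a by move=> e; move: ca; rewrite (ord_inj e) eqxx.
  case: (ltngtP a b) => h1; last by case: (ab' h1).
  - case: (ltngtP b c) => h2; last by case: (bc' h2).
    + by exists a, b, c.
    + case: (ltngtP a c) => h3; last by case: (ca' (esym h3)).
      * by exists a, c, b.
      * by exists c, a, b.
  - case: (ltngtP a c) => h2; last by case: (ca' (esym h2)).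
    + by exists b, a, c.
    + case: (ltngtP b c) => h3; last by case: (bc' h3).
      * by exists b, c, a.
      * by exists c, b, a.
case: (pred_ex BP loB miB l1) => p a1.
case: (succ_ex BP miB hiB l2) => s a2.
move/negP: H; apply; apply/existsP; exists p; apply/existsP; exists mi.
by apply/existsP; exists s; rewrite a1 a2.
Qed.

Lemma noout (x : 'I_N) : x \in D ->
  (forall j : 'I_N, ~~ is_arc P x j) <-> (forall z, z \in pblock P x -> z <= x).
Proof.
move=> xD; split.
  move=> H z zB; case: (leqP z x) => // xz.
  by case: (succ_ex (pbP xD) (pbx xD) zB xz) => j aj; have := H j; rewrite aj.
move=> H j; apply/negP => aj; case: (arc_same partP aj) => _ jD e.
have := H j; rewrite e pbx // => /(_ isT); have := arc_lt aj; lia.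
Qed.

Lemma noin (y : 'I_N) : y \in D ->
  (forall i : 'I_N, ~~ is_arc P i y) <-> (forall z, z \in pblock P y -> y <= z).
Proof.
move=> yD; split.
  move=> H z zB; case: (leqP y z) => // xz.
  by case: (pred_ex (pbP yD) zB (pbx yD) xz) => j aj; have := H j; rewrite aj.
move=> H j; apply/negP => aj; case: (arc_same partP aj) => jD _ e.
have := H j; rewrite -e pbx // => /(_ isT); have := arc_lt aj; lia.
Qed.

Lemma mmsE : max_min_sep P <->
  (forall x y : 'I_N, x \in D -> y \in D -> (y : nat) = x.+1 ->
     (forall j : 'I_N, ~~ is_arc P x j) -> (forall i : 'I_N, ~~ is_arc P i y) -> False).
Proof.
split.
  move/forall_inP => H x y xD yD exy no1 no2.
  have := forall_inP (H _ (pbP xD)) _ (pbP yD).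
  move=> /forall_inP /(_ x (pbx xD)) /forall_inP /(_ y (pbx yD)).
  rewrite /= exy eqxx implybF; move/negP; apply; apply/andP; split.
    by apply/forall_inP => z zB; apply: (proj1 (noout xD) no1).
  by apply/forall_inP => z zB; rewrite -exy; apply: (proj1 (noin yD) no2).
move=> H; apply/forall_inP => B BP; apply/forall_inP => B' BP'.
apply/forall_inP => x xB; apply/forall_inP => y yB; apply/implyP => /andP[/forall_inP m1 /forall_inP m2].
apply/eqP => e.
have xD := inD BP xB; have yD := inD BP' yB.
apply: (H x y xD yD (esym e)).
  by apply/(noout xD) => z; rewrite (def_pblock tI BP xB) => zB; exact: m1.
by apply/(noin yD) => z; rewrite (def_pblock tI BP' yB) => zB; exact: m2.
Qed.

End Chars.

Lemma arc_bnd2 N (P : {set {set 'I_N}}) i j : is_arc P i j -> i < N /\ j < N.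
Proof. move=> a; have := arc_lt a; have := arc_bnd a; lia. Qed.

Section NatChars.
Variable N : nat.
Variables (P : {set {set 'I_N}}) (D : {set 'I_N}).
Hypothesis partP : partition P D.

Lemma two_regularN : two_regular P <-> forall i : nat, ~~ is_arc P i i.+1.
Proof.
rewrite two_regularE; split; last by move=> H; apply/forallP => i; exact: H.
move/forallP => H i; apply/negP => a.
have [iN _] := arc_bnd2 a.
by have := H (Ordinal iN); rewrite a.
Qed.

Lemma feasibleN : feasible P <-> forall x : 'I_N, x \in D ->
  (forall j : nat, ~~ is_arc P x j) -> (forall i : nat, ~~ is_arc P i x) -> False.
Proof.
rewrite (feasibleE partP); split.
  move/forall_inP => H x xD h1 h2; case/orP: (H x xD) => /existsP [j aj].
    by have := h1 j; rewrite aj.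
  by have := h2 j; rewrite aj.
move=> H; apply/forall_inP => x xD; apply/negPn/negP => /norP [/existsPn h1 /existsPn h2].
apply: (H x xD).
  move=> j; apply/negP => a; have [_ jN] := arc_bnd2 a.
  by have := h1 (Ordinal jN); rewrite a.
move=> i; apply/negP => a; have [iN _] := arc_bnd2 a.
by have := h2 (Ordinal iN); rewrite a.
Qed.

Lemma poorN : poor P <-> forall i j k : nat, is_arc P i j -> is_arc P j k -> False.
Proof.
rewrite (poorE partP); split.
  move=> H i j k a1 a2; move/negP: H; apply.
  have [iN jN] := arc_bnd2 a1; have [_ kN] := arc_bnd2 a2.
  apply/existsP; exists (Ordinal iN); apply/existsP; exists (Ordinal jN).
  by apply/existsP; exists (Ordinal kN); rewrite /= a1 a2.
move=> H; apply/negP => /existsP [i /existsP [j /existsP [k /andP[a1 a2]]]].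
exact: H a1 a2.
Qed.

Lemma noncrossingN : noncrossing P <-> forall i j k l : nat,
  is_arc P i k -> is_arc P j l -> i < j -> j < k -> k < l -> False.
Proof.
split.
  move/forallP => H i j k l a1 a2 ij jk kl.
  have [iN kN] := arc_bnd2 a1; have [jN lN] := arc_bnd2 a2.
  move: (H (Ordinal iN)) => /forallP /(_ (Ordinal jN)) /forallP /(_ (Ordinal kN)).
  move=> /forallP /(_ (Ordinal lN)) /=; by rewrite a1 a2 ij jk kl.
move=> H; apply/forallP => i; apply/forallP => j; apply/forallP => k; apply/forallP => l.
apply/negP => /and5P [a1 a2 ij jk kl]; exact: H a1 a2 ij jk kl.
Qed.

Lemma mmsN : max_min_sep P <->
  (forall x y : 'I_N, x \in D -> y \in D -> (y : nat) = x.+1 ->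
     (forall j : nat, ~~ is_arc P x j) -> (forall i : nat, ~~ is_arc P i y) -> False).
Proof.
rewrite (mmsE partP); split.
  by move=> H x y xD yD e h1 h2; apply: (H x y xD yD e) => [j|i]; [apply: h1|apply: h2].
move=> H x y xD yD e h1 h2; apply: (H x y xD yD e).
  move=> j; apply/negP => a; have [_ jN] := arc_bnd2 a.
  by have := h1 (Ordinal jN); rewrite a.
move=> i; apply/negP => a; have [iN _] := arc_bnd2 a.
by have := h2 (Ordinal iN); rewrite a.
Qed.

End NatChars.

Lemma ord_ext N (f g : nat -> nat -> bool) :
  (forall i j, f i j -> i < N /\ j < N) -> (forall i j, g i j -> i < N /\ j < N) ->
  (forall i j : 'I_N, f i j = g i j) -> forall i j, f i j = g i j.
Proof.
move=> hf hg H i j.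
case: (ltnP i N) => iN; last first.
  by case E: (f i j); case E': (g i j) => //; [have := hf _ _ E | have := hg _ _ E']; lia.
case: (ltnP j N) => jN; last first.
  by case E: (f i j); case E': (g i j) => //; [have := hf _ _ E | have := hg _ _ E']; lia.
exact: (H (Ordinal iN) (Ordinal jN)).
Qed.

Lemma in_cover N (P : {set {set 'I_N}}) D (x : 'I_N) B :
  partition P D -> B \in P -> x \in B -> x \in D.
Proof. by case/and3P => /eqP <- _ _ BP xB; apply/bigcupP; exists B. Qed.

Lemma arc_pos n (L : {set {set 'I_n.+1}}) i j :
  partition L (ground n) -> is_arc L i j -> 0 < i.
Proof.
move=> pL /arcP [B [x [y [[BP xB _ xi _] _]]]].
by have := in_cover pL BP xB; rewrite inE -xi.
Qed.

Lemma shiftP n (L : {set {set 'I_n.+1}}) : partition L (ground n) ->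
  partition (shift L) (ground n.+1) /\
  forall i j, is_arc (shift L) i j = (0 < j) && is_arc L i j.-1.
Proof.
move=> pL; have [_ tI _] := and3P pL.
pose A i j := (0 < j) && is_arc L i j.-1.
have Hlt i j : A i j -> i < j.
  by case/andP => j0 a; have := arc_lt a; lia.
have Hfun i j j' : A i j -> A i j' -> j = j'.
  rewrite /A => /andP [j0 a] /andP [j0' a']; have := arc_fun tI a a'; lia.
have Hinj i i' j : A i j -> A i' j -> i = i'.
  rewrite /A => /andP [j0 a] /andP [_ a']; exact: arc_inj tI a a'.
have HN i j : A i j -> j < n.+2.
  case/andP => j0 a; have := arc_bnd a; lia.
have HD (a b : 'I_n.+2) : A a b -> (a \in ground n.+1) && (b \in ground n.+1).
  case/andP => b0 a'; rewrite !inE b0 andbT; exact: arc_pos pL a'.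
have [Q [pQ HQ]] := exist_part Hlt Hfun Hinj HN HD.
rewrite /shift; case: pickP => [Q' /andP [pQ' /forallP H] | H]; last first.
  have := H Q; rewrite pQ /=; move/negbT/negP; case.
  by apply/forallP => i; apply/forallP => j; rewrite HQ.
split=> //; apply: (@ord_ext n.+2).
- move=> i j a; exact: arc_bnd2 a.
- move=> i j a; have := Hlt _ _ a; have := HN _ _ a; lia.
- move=> i j; have := forallP (H i) j. move/eqP. move=> e; exact e.
Qed.

Lemma unshiftP n (La : {set {set 'I_n.+2}}) : partition La (ground n.+1) ->
  two_regular La -> exists L : {set {set 'I_n.+1}},
  partition L (ground n) /\ forall i j, is_arc L i j = is_arc La i j.+1.
Proof.
move=> pL /(two_regularN La) tr; have [_ tI _] := and3P pL.
pose A i j := is_arc La i j.+1.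
have Hlt i j : A i j -> i < j.
  rewrite /A => a; have ij1 := arc_lt a; case: (ltngtP i j) => // h; first lia.
  by move: (tr i); rewrite {2}h a.
have Hfun i j j' : A i j -> A i j' -> j = j'.
  move=> a a'; have := arc_fun tI a a'; lia.
have Hinj i i' j : A i j -> A i' j -> i = i'.
  move=> a a'; exact: arc_inj tI a a'.
have HN i j : A i j -> j < n.+1.
  move=> a; have := arc_bnd a; lia.
have HD (a b : 'I_n.+1) : A a b -> (a \in ground n) && (b \in ground n).
  move=> a'; have h1 := arc_pos pL a'; have h2 := Hlt _ _ a'; rewrite !inE h1 /=; lia.
have [Q [pQ HQ]] := exist_part Hlt Hfun Hinj HN HD.
by exists Q.
Qed.

Lemma shift_inj n (L1 L2 : {set {set 'I_n.+1}}) :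
  partition L1 (ground n) -> partition L2 (ground n) -> shift L1 = shift L2 -> L1 = L2.
Proof.
move=> p1 p2 e; apply: (part_uniq p1 p2) => i j.
have [_ h1] := shiftP p1; have [_ h2] := shiftP p2.
by move: (h1 i j.+1) (h2 i j.+1); rewrite e /= => -> ->.
Qed.

Lemma shift_2reg n (L : {set {set 'I_n.+1}}) :
  partition L (ground n) -> two_regular (shift L).
Proof.
move=> pL; have [pS hS] := shiftP pL.
apply/(two_regularN (shift L)) => i; rewrite hS /=; apply/negP => a.
by have := arc_lt a; rewrite ltnn.
Qed.

Lemma unshift_eq n (La : {set {set 'I_n.+2}}) (L : {set {set 'I_n.+1}}) :
  partition La (ground n.+1) -> partition L (ground n) ->
  (forall i j, is_arc L i j = is_arc La i j.+1) -> shift L = La.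
Proof.
move=> pLa pL H; have [pS hS] := shiftP pL.
apply: (part_uniq pS pLa) => i j; rewrite hS.
case: j => [|j] /=; last by rewrite H.
by case E: (is_arc La i 0) => //; have := arc_lt E.
Qed.

Theorem lemma3p1 (n : nat) :
  (shift (n:=n) @: [set L in set_partitions n | feasible L]
     = [set L in set_partitions n.+1 | two_regular L && max_min_sep L]
   /\ {in [set L in set_partitions n | feasible L] &, injective (@shift n)})
  /\
  (shift (n:=n) @: [set L in set_partitions n | poor L && noncrossing L]
     = [set L in set_partitions n.+1 | two_regular L && noncrossing L]
   /\ {in [set L in set_partitions n | poor L && noncrossing L] &, injective (@shift n)}).
Proof.
split; split.
- apply/setP => La; apply/imsetP/idP.
    case=> L; rewrite /set_partitions !inE => /andP [pL fL] ->.
    have [pS hS] := shiftP pL.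
    rewrite pS (shift_2reg pL) /=.
    apply/(mmsN pS) => x y xD yD exy no1 no2.
    have xn : (x : nat) < n.+1 by have := ltn_ord y; lia.
    move/(feasibleN pL): fL; move=> H; apply: (H (Ordinal xn)).
    + by move: xD; rewrite /set_partitions !inE.
    + move=> j; apply/negP => a; have := no1 j.+1; by rewrite hS /= a.
    + move=> i; apply/negP => a; have := no2 i; by rewrite hS exy /= a.
  rewrite /set_partitions !inE => /and3P [pLa tr ms].
  have [L [pL HL]] := unshiftP pLa tr.
  exists L; last by rewrite (unshift_eq pLa pL HL).
  rewrite /set_partitions !inE pL /=; apply/(feasibleN pL) => x xD no1 no2.
  have xn : (x : nat).+1 < n.+2 by have := ltn_ord x; lia.
  have xn' : (x : nat) < n.+2 by have := ltn_ord x; lia.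
  move/(mmsN pLa): ms; move=> H; apply: (H (Ordinal xn') (Ordinal xn)) => //=.
  + by move: xD; rewrite /set_partitions !inE.
  + by rewrite inE.
  + move=> j; case: j => [|j]; first by apply/negP => a; have := arc_lt a.
    by rewrite -HL.
  + by move=> i; rewrite -HL.
- move=> L1 L2; rewrite /set_partitions !inE => /andP [p1 _] /andP [p2 _]; exact: shift_inj.
- apply/setP => La; apply/imsetP/idP.
    case=> L; rewrite /set_partitions !inE => /and3P [pL pr nc] ->.
    have [pS hS] := shiftP pL.
    rewrite pS (shift_2reg pL) /=.
    move/(poorN pL): pr => pr; move/(noncrossingN L): nc => nc.
    apply/(noncrossingN (shift L)) => i j k l.
    rewrite !hS => /andP [k0 a1] /andP [l0 a2] ij jk kl.
    case: (ltngtP j k.-1) => h.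
    + apply: (nc i j k.-1 l.-1) => //; lia.
    + lia.
    + by apply: (pr i j l.-1) => //; rewrite h.
  rewrite /set_partitions !inE => /and3P [pLa tr nc].
  have [L [pL HL]] := unshiftP pLa tr.
  exists L; last by rewrite (unshift_eq pLa pL HL).
  move/(noncrossingN La): nc => nc.
  rewrite /set_partitions !inE pL /=; apply/andP; split.
    apply/(poorN pL) => i j k a1 a2.
    have h1 := arc_lt a1; have h2 := arc_lt a2; rewrite !HL in a1 a2.
    apply: (nc i j j.+1 k.+1 a1 a2); lia.
  apply/(noncrossingN L) => i j k l; rewrite !HL => a1 a2 ij jk kl.
  apply: (nc i j k.+1 l.+1 a1 a2); lia.
- move=> L1 L2; rewrite /set_partitions !inE => /andP [p1 _] /andP [p2 _]; exact: shift_inj.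
Qed.
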